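(* Let $G$ be a finite group with $|G| = mp^k$, where $p$ is a prime, $k \geq 1$, and $m$ is a natural number such that $1 < m/q < p < m$, where $q$ is the smallest prime divisor of $m$. If $P$ and $R$ are distinct Sylow $p$-subgroups of $G$, then $G = \langle P, R\rangle$ and $P \cap R = O_p(G)$ has order $p^{k-1}$.
   Context: $O_p(G)$ denotes the largest normal $p$-subgroup of $G$. *)

(* Defs.v *)
From mathcomp Require Import all_boot all_fingroup all_solvable.

(* Main.v *)
Require Import Defs.
From mathcomp Require Import all_boot all_fingroup all_solvable.
From mathcomp Require Import zify.
Set Implicit Arguments.
Unset Strict Implicit.
Unset Printing Implicit Defensive.

Lemma arithA p m d : prime p -> 0 < m -> m %/ pdiv m < p -> d %| m ->
  d %% p = 1 -> d = 1 \/ d = m.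
Proof.
move=> pp m0 hq dm dp.
case: (eqVneq d m) => [->|ne]; [by right|left].
have d0 : 0 < d by apply: dvdn_gt0 dm.
set e := m %/ d.
have me : m = e * d by rewrite divnK.
have e1 : 1 < e.
  case: e me => [|[|e]] //= me; [by move: m0; rewrite me | by move: ne; rewrite me mul1n eqxx].
have qe : pdiv m <= e by apply: pdiv_min_dvd => //; rewrite me dvdn_mulr.
have q0 : 0 < pdiv m by apply: pdiv_gt0.
have : d <= m %/ pdiv m.
  by rewrite leq_divRL // {2}me mulnC leq_mul2r qe orbT.
move=> hd.
have dlt : d < p by apply: leq_ltn_trans hd hq.
by move: dp; rewrite modn_small.
Qed.

Lemma arithB p m : prime p -> 1 < m %/ pdiv m -> m %/ pdiv m < p -> p < m ->
  ~~ (p %| m) /\ m < p * p.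
Proof.
move=> pp h1 h2 h3.
have m1 : 1 < m := ltn_trans (prime_gt1 pp) h3.
move: h1 h2 (pdiv_prime m1) (pdiv_dvd m) (@pdiv_min_dvd m).
move: (pdiv m) => q h1 h2 qp qm qmin.
have q0 : 0 < q by apply: prime_gt0.
move: h1 h2; set t := m %/ q => h1 h2.
have mt : m = t * q by rewrite divnK.
have qt : q <= t by apply: qmin => //; rewrite mt dvdn_mulr.
split; last first.
  rewrite mt; apply: (@leq_trans (p * q)); first by rewrite ltn_mul2r q0 h2.
  rewrite leq_mul2l; apply/orP; right; apply: ltnW; apply: leq_ltn_trans qt h2.
apply/negP => pm.
have qlep : q <= p by apply: qmin => //; apply: prime_gt1.
have /dvdnP [s ms] := pm.
have s1 : 1 < s.
  case: s ms => [|[|s]] // ms; first by move: m1; rewrite ms.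
  by move: h3; rewrite ms mul1n ltnn.
have qs : q <= s by apply: qmin => //; rewrite ms dvdn_mulr.
have : s * p <= t * p.
  by rewrite -ms mt leq_mul2l qlep orbT.
rewrite leq_mul2r => /orP [/eqP p0|st]; first by move: pp; rewrite p0.
have : s * p < q * p.
  by rewrite -ms mt mulnC ltn_mul2l q0 h2.
by rewrite ltn_mul2r => /andP [_]; rewrite ltnNge qs.
Qed.

Open Scope group_scope.

Lemma keyH p m (gT : finGroupType) (G H P R : {group gT}) : prime p -> 0 < m ->
  m %/ pdiv m < p -> p.-Sylow(G) P -> p.-Sylow(G) R -> P != R -> #|G : P| = m ->
  P \subset H -> R \subset H -> H \subset G ->
  #|'Syl_p(H)| = m /\ #|H : P| = m.
Proof.
move=> pp m0 hq sP sR neq iP PH RH HG.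
have sPH := pHall_subl PH HG sP.
have sRH := pHall_subl RH HG sR.
have d1 : #|'Syl_p(H)| %| m.
  rewrite (card_Syl sPH) -iP.
  apply: dvdn_trans (indexSg PH HG).
  apply: indexgS; rewrite subsetI PH; exact: normG.
have g1 : 1 < #|'Syl_p(H)|.
  by apply/card_gt1P; exists P, R; rewrite !inE sPH sRH.
have [e1|em] := arithA pp m0 hq d1 (card_Syl_mod H pp).
  by move: g1; rewrite e1.
split => //.
apply/eqP; rewrite eqn_dvd -{1}iP indexSg //= -em.
rewrite (card_Syl sPH); apply: indexgS; rewrite subsetI PH; exact: normG.
Qed.

Theorem lemma3 (gT : finGroupType) (G P R : {group gT}) (p k m : nat) :
  prime p -> 1 <= k ->
  #|G| = (m * p ^ k)%N ->
  1 < m %/ pdiv m -> m %/ pdiv m < p -> p < m ->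
  P \in 'Syl_p(G) -> R \in 'Syl_p(G) -> P != R ->
  (P <*> R)%g = G /\ P :&: R = 'O_p(G) /\ #|P :&: R| = (p ^ k.-1)%N.
Proof.
move=> pp k1 cG h1 h2 h3 PS RS neq.
have [npm mpp] := arithB pp h1 h2 h3.
have m0 : 0 < m by apply: ltn_trans h3; apply: prime_gt0.
have pk0 : 0 < (p ^ k)%N by rewrite expn_gt0 prime_gt0.
have sP : p.-Sylow(G) P by move: PS; rewrite inE.
have sR : p.-Sylow(G) R by move: RS; rewrite inE.
have cpart : (#|G|`_p)%N = (p ^ k)%N.
  rewrite p_part cG lognM // pfactorK // logn_coprime ?prime_coprime //.
have cP : #|P| = (p ^ k)%N by rewrite (card_Hall sP).
have cR : #|R| = (p ^ k)%N by rewrite (card_Hall sR).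
have PG := pHall_sub sP.
have RG := pHall_sub sR.
have idx (X : {group gT}) : X \subset G -> #|X| = (p ^ k)%N -> #|G : X| = m.
  move=> XG cX; apply/eqP; rewrite -(eqn_pmul2l pk0) -cX Lagrange // cX cG mulnC.
  done.
have iP := idx P PG cP.
have iR := idx R RG cR.
have neq' : R != P by rewrite eq_sym.
have [nS _] := keyH pp m0 h2 sP sR neq iP PG RG (subxx G).
have JG : P <*> R \subset G by rewrite join_subG PG RG.
have [_ iJ] := keyH pp m0 h2 sP sR neq iP (joing_subl P R) (joing_subr P R) JG.
have eJ : P <*> R = G.
  have PJ : P \subset (P <*> R)%G by exact: joing_subl.
  apply/eqP; rewrite eqEcard JG -(Lagrange PJ) iJ.
  by rewrite -(Lagrange PG) iP leqnn.
have NR : 'N_G(R) = R.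
  have RN : R \subset 'N_G(R) by rewrite subsetI RG normG.
  apply/eqP; rewrite eq_sym eqEcard RN.
  have := Lagrange (subsetIl G 'N(R)); rewrite -(card_Syl sR) nS -(Lagrange RG) iR.
  by move/eqP; rewrite eqn_mul2r eqn0Ngt m0 /= => /eqP ->.
have NPR : 'N_P(R) = P :&: R by rewrite -{2}NR setIA (setIidPl PG).
have orb : #|P : P :&: R| <= m.-1.
  rewrite -NPR -astab1JG -card_orbit.
  have sub : orbit 'JG%act P R \subset 'Syl_p(G) :\ P.
    apply/subsetP => y /imsetP [x xP ->]; rewrite !inE /=.
    apply/andP; split.
      apply: contra neq' => /eqP e.
      apply/eqP; apply: val_inj => /=.
      have : (R :^ x) :^ x^-1 = P :^ x^-1 by rewrite -(congr1 val e).
      by rewrite conjsgK conjGid // groupV.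
    by rewrite pHallJ // (subsetP PG).
  apply: leq_trans (subset_leq_card sub) _.
  by move: (cardsD1 P 'Syl_p(G)); rewrite PS nS add1n => ->.
have [j jk ej] : exists2 j, j <= k & #|P : P :&: R| = (p ^ j)%N.
  by apply/dvdn_pfactor => //; rewrite -cP dvdn_indexg.
have j1 : j = 1%N.
  have jlt : (j < 2)%N.
    rewrite -(ltn_exp2l _ _ (prime_gt1 pp)) -ej (expnS p 1) expn1.
    exact: (leq_ltn_trans orb (leq_ltn_trans (leq_pred m) mpp)).
  case: j ej {jk} jlt => [|[|]] // ej _.
  have e := index1g (subsetIl P R) ej.
  have PR : P \subset R by rewrite -e subsetIr.
  exfalso; move/negP: neq; apply; apply/eqP; apply: val_inj => /=.
  by apply/eqP; rewrite eqEcard PR cP cR leqnn.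
rewrite j1 expn1 in ej.
have cD : #|P :&: R| = (p ^ k.-1)%N.
  have := Lagrange (subsetIl P R); rewrite ej cP -(prednK k1) expnSr => /eqP.
  by rewrite eqn_pmul2r ?prime_gt0 // => /eqP.
have eR : #|R : P :&: R| = p.
  have := Lagrange (subsetIr P R); rewrite cD cR -{2}(prednK k1) expnSr => /eqP.
  by rewrite eqn_pmul2l ?expn_gt0 ?prime_gt0 // => /eqP.
have pD : p.-group (P :&: R) := pgroupS (subsetIl P R) (pHall_pgroup sP).
have nDP : P \subset 'N(P :&: R).
  apply: normal_norm; apply: (p_maximal_normal (pHall_pgroup sP)).
  by apply: p_index_maximal; rewrite ?subsetIl // ej.
have nDR : R \subset 'N(P :&: R).
  apply: normal_norm; apply: (p_maximal_normal (pHall_pgroup sR)).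
  by apply: p_index_maximal; rewrite ?subsetIr // eR.
have nDG : G \subset 'N(P :&: R) by rewrite -eJ join_subG nDP nDR.
have DG : P :&: R <| G by rewrite /normal (subset_trans (subsetIl P R) PG) nDG.
split=> //; split=> //.
apply/eqP; rewrite eqEsubset pcore_max //= subsetI !pcore_sub_Hall //.
Qed.
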